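(* There exist a compact Hausdorff space $X$ and a UCO subset $Y$ of $X$ such that $Y$, with the subspace topology, is not compactly Choquet-complete. In particular, there exist an LCS-complete space and a UCO subset of it which is not LCS-complete.
   Context: A UCO subset of a space is the union of a closed subset and an open subset. Strong Choquet game: players $\beta$ and $\alpha$ alternate; at round $n$, $\beta$ picks a point $x_n$ and an open neighborhood $V_n$ of $x_n$ with $V_n\subseteq U_{n-1}$ (when $n\ge1$), and $\alpha$ picks an open $U_n$ with $x_n\in U_n\subseteq V_n$; strategies may depend on the whole history. A space is compactly Choquet-complete if $\alpha$ has a strategy ensuring that $(U_n)_n$ is a base of open neighborhoods of some non-empty compact saturated set. A space is LCS-complete if it is homeomorphic to a $G_\delta$ subset (countable intersection of open sets), with the subspace topology, of some locally compact sober space. *)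

(* Defs.v *)
From Stdlib Require Import List.
Import ListNotations.

Set Implicit Arguments.

Definition subset {X : Type} (A B : X -> Prop) : Prop := forall x, A x -> B x.

Record topology (X : Type) : Type := Topology {
  open : (X -> Prop) -> Prop;
  open_full : open (fun _ => True);
  open_inter : forall U V, open U -> open V -> open (fun x => U x /\ V x);
  open_union : forall F : (X -> Prop) -> Prop,
      (forall U, F U -> open U) -> open (fun x => exists U, F U /\ U x)
}.
Arguments open {X} t _.

Definition closed {X : Type} (T : topology X) (C : X -> Prop) : Prop :=
  open T (fun x => ~ C x).

Lemma subspace_full {X : Type} (T : topology X) (Y : X -> Prop) :
  exists U, open T U /\ forall y : {x | Y x}, True <-> U (proj1_sig y).
Proof. exists (fun _ => True). split; [apply open_full | tauto]. Qed.

Lemma subspace_inter {X : Type} (T : topology X) (Y : X -> Prop)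
  (A B : {x | Y x} -> Prop) :
  (exists U, open T U /\ forall y, A y <-> U (proj1_sig y)) ->
  (exists U, open T U /\ forall y, B y <-> U (proj1_sig y)) ->
  exists U, open T U /\ forall y, (A y /\ B y) <-> U (proj1_sig y).
Proof.
  intros [U [HU HA]] [V [HV HB]]. exists (fun x => U x /\ V x).
  split; [apply open_inter; assumption|].
  intro y. rewrite HA, HB. tauto.
Qed.

Lemma subspace_union {X : Type} (T : topology X) (Y : X -> Prop)
  (F : ({x | Y x} -> Prop) -> Prop) :
  (forall A, F A -> exists U, open T U /\ forall y, A y <-> U (proj1_sig y)) ->
  exists U, open T U /\ forall y, (exists A, F A /\ A y) <-> U (proj1_sig y).
Proof.
  intros HF.
  exists (fun x => exists W, (open T W /\ exists A, F A /\
             forall y, A y <-> W (proj1_sig y)) /\ W x).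
  split.
  - apply open_union. intros W [HW _]. exact HW.
  - intro y. split.
    + intros [A [HA Ay]]. destruct (HF A HA) as [W [HW HAW]].
      exists W. split; [split; [exact HW | exists A; split; assumption]|].
      apply HAW; exact Ay.
    + intros [W [[HW [A [HA HAW]]] Wy]]. exists A. split; [exact HA|].
      apply HAW; exact Wy.
Qed.

Definition subspace {X : Type} (T : topology X) (Y : X -> Prop) : topology {x | Y x} :=
  @Topology {x | Y x}
    (fun A => exists U, open T U /\ forall y, A y <-> U (proj1_sig y))
    (subspace_full T Y)
    (fun A B => @subspace_inter X T Y A B)
    (fun F => @subspace_union X T Y F).

Definition compact_set {X : Type} (T : topology X) (K : X -> Prop) : Prop :=
  forall F : (X -> Prop) -> Prop,
    (forall U, F U -> open T U) ->
    subset K (fun x => exists U, F U /\ U x) ->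
    exists l : list (X -> Prop), Forall F l /\ subset K (fun x => exists U, In U l /\ U x).

Definition compact_space {X : Type} (T : topology X) : Prop :=
  compact_set T (fun _ => True).

Definition hausdorff {X : Type} (T : topology X) : Prop :=
  forall x y : X, x <> y ->
    exists U V, open T U /\ open T V /\ U x /\ V y /\ forall z, ~ (U z /\ V z).

Definition saturated {X : Type} (T : topology X) (Q : X -> Prop) : Prop :=
  forall x, (forall U, open T U -> subset Q U -> U x) -> Q x.

Definition nbhd_base {X : Type} (T : topology X) (U : nat -> X -> Prop) (Q : X -> Prop) : Prop :=
  (forall n, open T (U n) /\ subset Q (U n)) /\
  (forall W, open T W -> subset Q W -> exists n, subset (U n) W).

Definition UCO {X : Type} (T : topology X) (Y : X -> Prop) : Prop :=
  exists C U, closed T C /\ open T U /\ forall x, Y x <-> (C x \/ U x).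

(** Strong Choquet game. A strategy for alpha receives the whole history
    (list of previous rounds (x_k, V_k, U_k)) and beta's current move (x_n, V_n)
    and returns U_n. *)
Definition alpha_strategy (X : Type) : Type :=
  list (X * (X -> Prop) * (X -> Prop)) -> X -> (X -> Prop) -> (X -> Prop).

Definition history {X : Type} (x : nat -> X) (V U : nat -> X -> Prop) (n : nat)
  : list (X * (X -> Prop) * (X -> Prop)) :=
  map (fun k => (x k, V k, U k)) (seq 0 n).

Definition legal_strategy {X : Type} (T : topology X) (s : alpha_strategy X) : Prop :=
  forall h x V, open T V -> V x ->
    open T (s h x V) /\ s h x V x /\ subset (s h x V) V.

Definition play_following {X : Type} (T : topology X) (s : alpha_strategy X)
  (x : nat -> X) (V U : nat -> X -> Prop) : Prop :=
  (forall n, open T (V n) /\ V n (x n)) /\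
  (forall n, subset (V (S n)) (U n)) /\
  (forall n, U n = s (history x V U n) (x n) (V n)).

Definition compactly_choquet_complete {X : Type} (T : topology X) : Prop :=
  exists s : alpha_strategy X, legal_strategy T s /\
    forall x V U, play_following T s x V U ->
      exists Q : X -> Prop, (exists q, Q q) /\ compact_set T Q /\ saturated T Q /\
        nbhd_base T U Q.

Definition locally_compact {X : Type} (T : topology X) : Prop :=
  forall x U, open T U -> U x ->
    exists W K, open T W /\ compact_set T K /\ W x /\ subset W K /\ subset K U.

Definition irreducible_closed {X : Type} (T : topology X) (C : X -> Prop) : Prop :=
  closed T C /\ (exists x, C x) /\
  forall F1 F2, closed T F1 -> closed T F2 ->
    subset C (fun x => F1 x \/ F2 x) -> subset C F1 \/ subset C F2.

Definition point_closure {X : Type} (T : topology X) (x : X) : X -> Prop :=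
  fun y => forall C, closed T C -> C x -> C y.

Definition sober {X : Type} (T : topology X) : Prop :=
  forall C, irreducible_closed T C ->
    exists! x, forall y, C y <-> point_closure T x y.

Definition G_delta {X : Type} (T : topology X) (G : X -> Prop) : Prop :=
  exists W : nat -> X -> Prop, (forall n, open T (W n)) /\
    forall x, G x <-> forall n, W n x.

Definition continuous {X Y : Type} (TX : topology X) (TY : topology Y) (f : X -> Y) : Prop :=
  forall V, open TY V -> open TX (fun x => V (f x)).

Definition homeomorphic {X Y : Type} (TX : topology X) (TY : topology Y) : Prop :=
  exists (f : X -> Y) (g : Y -> X),
    continuous TX TY f /\ continuous TY TX g /\
    (forall x, g (f x) = x) /\ (forall y, f (g y) = y).

Definition LCS_complete {X : Type} (T : topology X) : Prop :=
  exists (Z : Type) (TZ : topology Z) (G : Z -> Prop),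
    locally_compact TZ /\ sober TZ /\ G_delta TZ G /\
    homeomorphic T (subspace TZ G).

(* Main.v *)
Require Import Defs.
From Stdlib Require Import List Arith Lia Classical IndefiniteDescription PropExtensionality FunctionalExtensionality.
Import ListNotations.

Lemma open_ext {X : Type} (T : topology X) (A B : X -> Prop) :
  (forall x, A x <-> B x) -> open T A -> open T B.
Proof.
  intros H HA. replace B with A; auto.
  apply functional_extensionality; intro x; apply propositional_extensionality; auto.
Qed.

Lemma set_ext {X : Type} (A B : X -> Prop) : (forall x, A x <-> B x) -> A = B.
Proof.
  intros H. apply functional_extensionality; intro x; apply propositional_extensionality; auto.
Qed.

Lemma choice_fun {A B : Type} (R : A -> B -> Prop) :
  (forall x, exists y, R x y) -> exists f, forall x, R x (f x).
Proof.
  intros H. exists (fun x => proj1_sig (constructive_indefinite_description _ (H x))).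
  intro x. exact (proj2_sig (constructive_indefinite_description _ (H x))).
Qed.

Definition D := nat -> nat.
Definition X := (option D * option nat)%type.
Definition aout (F : list D) (a : option D) : Prop :=
  match a with None => True | Some d => ~ In d F end.
Definition bge (N : nat) (b : option nat) : Prop :=
  match b with None => True | Some m => N <= m end.
Definition aclose (a : option D) (F : list D) (a' : option D) : Prop :=
  a' = a \/ (a = None /\ aout F a').
Definition bclose (b : option nat) (N : nat) (b' : option nat) : Prop :=
  b' = b \/ (b = None /\ bge N b').
Definition box (x : X) (F : list D) (N : nat) : X -> Prop :=
  fun z => aclose (fst x) F (fst z) /\ bclose (snd x) N (snd z).
Definition openX (W : X -> Prop) : Prop :=
  forall x, W x -> exists F N, forall z, box x F N z -> W z.

Lemma openX_full : openX (fun _ => True).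
Proof. intros x _. exists [], 0. auto. Qed.

Lemma openX_inter U V : openX U -> openX V -> openX (fun x => U x /\ V x).
Proof.
  intros HU HV x [Ux Vx].
  destruct (HU x Ux) as [F1 [N1 H1]]. destruct (HV x Vx) as [F2 [N2 H2]].
  exists (F1 ++ F2), (Nat.max N1 N2). intros z [Ha Hb]. split.
  - apply H1. split.
    + destruct Ha as [Ha|[Ha1 Ha2]]; [left; auto|right; split; auto].
      destruct (fst z); simpl in *; auto. intro Hi; apply Ha2, in_or_app; auto.
    + destruct Hb as [Hb|[Hb1 Hb2]]; [left; auto|right; split; auto].
      destruct (snd z); simpl in *; auto. lia.
  - apply H2. split.
    + destruct Ha as [Ha|[Ha1 Ha2]]; [left; auto|right; split; auto].
      destruct (fst z); simpl in *; auto. intro Hi; apply Ha2, in_or_app; auto.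
    + destruct Hb as [Hb|[Hb1 Hb2]]; [left; auto|right; split; auto].
      destruct (snd z); simpl in *; auto. lia.
Qed.

Lemma openX_union (F : (X -> Prop) -> Prop) :
  (forall U, F U -> openX U) -> openX (fun x => exists U, F U /\ U x).
Proof.
  intros H x [U [FU Ux]]. destruct (H U FU x Ux) as [F' [N HN]].
  exists F', N. intros z Hz. exists U. auto.
Qed.

Definition TX : topology X := @Topology X openX openX_full openX_inter openX_union.

Lemma aclose_trans a F a' a'' : aclose a F a' -> aclose a' F a'' -> aclose a F a''.
Proof.
  unfold aclose. intros [H1|[H1 H2]] [H3|[H3 H4]]; subst; auto.
Qed.

Lemma bclose_trans a F a' a'' : bclose a F a' -> bclose a' F a'' -> bclose a F a''.
Proof.
  unfold bclose. intros [H1|[H1 H2]] [H3|[H3 H4]]; subst; auto.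
Qed.

Lemma box_open x F N : openX (box x F N).
Proof.
  intros y [Ha Hb]. exists F, N. intros z [Ha' Hb']. split.
  - eapply aclose_trans; eauto.
  - eapply bclose_trans; eauto.
Qed.

Lemma box_center x F N : box x F N x.
Proof. split; left; auto. Qed.

Definition sepF (a : option D) : list D := match a with Some d => [d] | None => [] end.
Definition sepN (b : option nat) : nat := match b with Some n => S n | None => 0 end.

Lemma aclose_sep a1 a2 z : aclose a1 (sepF a2) z -> aclose a2 (sepF a1) z -> a1 = a2.
Proof.
  unfold aclose. intros [H1|[H1 H2]] [H3|[H3 H4]]; subst; auto.
  - destruct a1; simpl in *; auto. exfalso; apply H4; simpl; auto.
  - destruct a2; simpl in *; auto. exfalso; apply H2; simpl; auto.
Qed.

Lemma bclose_sep a1 a2 z : bclose a1 (sepN a2) z -> bclose a2 (sepN a1) z -> a1 = a2.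
Proof.
  unfold bclose. intros [H1|[H1 H2]] [H3|[H3 H4]]; subst; auto.
  - destruct a1; simpl in *; auto. lia.
  - destruct a2; simpl in *; auto. lia.
Qed.

Lemma TX_hausdorff : hausdorff TX.
Proof.
  intros x y Hxy. exists (box x (sepF (fst y)) (sepN (snd y))), (box y (sepF (fst x)) (sepN (snd x))).
  split; [apply box_open|]. split; [apply box_open|].
  split; [apply box_center|]. split; [apply box_center|].
  intros z [[Ha1 Hb1] [Ha2 Hb2]]. apply Hxy.
  destruct x as [a1 b1], y as [a2 b2]; simpl in *.
  rewrite (aclose_sep _ _ _ Ha1 Ha2), (bclose_sep _ _ _ Hb1 Hb2). auto.
Qed.

Lemma TX_compact : compact_space TX.
Proof.
  intros Fam HFo Hcov.
  assert (Hp : forall x : X, exists U, Fam U /\ U x) by (intro x; apply Hcov; auto).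
  destruct (choice_fun _ Hp) as [pick Hpick].
  assert (Hb : forall x : X, exists FN : list D * nat, forall z, box x (fst FN) (snd FN) z -> pick x z).
  { intro x. destruct (Hpick x) as [H1 H2]. destruct (HFo _ H1 x H2) as [F [N HN]].
    exists (F, N). exact HN. }
  destruct (choice_fun _ Hb) as [bx Hbx].
  set (p0 := (@None D, @None nat) : X).
  set (F0 := fst (bx p0)). set (N0 := snd (bx p0)).
  set (pts := [p0] ++ map (fun d => (Some d, None) : X) F0
      ++ flat_map (fun d => map (fun m => (Some d, Some m) : X) (seq 0 (snd (bx (Some d, None))))) F0
      ++ map (fun n => (None, Some n) : X) (seq 0 N0)
      ++ flat_map (fun n => map (fun d => (Some d, Some n) : X) (fst (bx (None, Some n)))) (seq 0 N0)).
  exists (map pick pts). split.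
  - apply Forall_forall. intros U HU. apply in_map_iff in HU. destruct HU as [y [<- _]].
    apply Hpick.
  - intros x _.
    assert (Hc : exists y, In y pts /\ pick y x).
    2:{ destruct Hc as [y [Hy Hyx]]. exists (pick y). split; auto. apply in_map; auto. }
    destruct x as [a b].
    destruct (classic (aout F0 a /\ bge N0 b)) as [Hin|Hout].
    + exists p0. split. { unfold pts. simpl; auto. }
      apply Hbx. destruct Hin. split; right; simpl; auto.
    + apply not_and_or in Hout. destruct Hout as [Ha|Hb'].
      * destruct a as [d|]; simpl in Ha; [|tauto]. apply NNPP in Ha.
        destruct b as [m|].
        -- destruct (le_lt_dec (snd (bx (Some d, None))) m) as [Hm|Hm].
           ++ exists (Some d, None). split.
              { unfold pts. apply in_or_app; right; apply in_or_app; left. apply in_map_iff; exists d; split; [reflexivity|auto]. }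
              apply Hbx. split; [left; auto|right; simpl; auto].
           ++ exists (Some d, Some m). split; [|apply Hpick].
              unfold pts. apply in_or_app; right; apply in_or_app; right; apply in_or_app; left.
              apply in_flat_map. exists d. split; auto. apply in_map_iff; exists m; split; [reflexivity|apply in_seq; lia].
        -- exists (Some d, None). split; [|apply Hpick].
           unfold pts. apply in_or_app; right; apply in_or_app; left. apply in_map_iff; exists d; split; [reflexivity|auto].
      * destruct b as [n|]; simpl in Hb'; [|tauto].
        destruct a as [d|].
        -- destruct (classic (In d (fst (bx (None, Some n))))) as [Hd|Hd].
           ++ exists (Some d, Some n). split; [|apply Hpick].
              unfold pts. do 4 (apply in_or_app; right).
              apply in_flat_map. exists n. split; [apply in_seq; lia|]. apply in_map_iff; exists d; split; [reflexivity|auto].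
           ++ exists (None, Some n). split.
              { unfold pts. do 3 (apply in_or_app; right). apply in_or_app; left.
                apply in_map_iff; exists n; split; [reflexivity|apply in_seq; lia]. }
              apply Hbx. split; [right; simpl; auto|left; auto].
        -- exists (None, Some n). split; [|apply Hpick].
           unfold pts. do 3 (apply in_or_app; right). apply in_or_app; left.
           apply in_map_iff; exists n; split; [reflexivity|apply in_seq; lia].
Qed.

Lemma aclose_notclosed a F a' : ~ aclose a F a' ->
  exists F', forall a'', aclose a' F' a'' -> ~ aclose a F a''.
Proof.
  intros H. destruct a' as [e|].
  - exists []. intros a'' [H1|[H1 H2]]; [subst; auto|discriminate].
  - destruct a as [d|].
    + exists [d]. intros a'' [H1|[_ H2]] H3; subst.
      * destruct H3 as [H3|[H3 _]]; discriminate.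
      * destruct a'' as [e|]; simpl in H2.
        -- destruct H3 as [H3|[H3 _]]; [|discriminate]. injection H3; intros; subst.
           apply H2; simpl; auto.
        -- destruct H3 as [H3|[H3 _]]; discriminate.
    + exfalso; apply H. right; simpl; auto.
Qed.

Lemma bclose_notclosed b N b' : ~ bclose b N b' ->
  exists N', forall b'', bclose b' N' b'' -> ~ bclose b N b''.
Proof.
  intros H. destruct b' as [e|].
  - exists 0. intros b'' [H1|[H1 H2]]; [subst; auto|discriminate].
  - destruct b as [d|].
    + exists (S d). intros b'' [H1|[_ H2]] H3; subst.
      * destruct H3 as [H3|[H3 _]]; discriminate.
      * destruct b'' as [e|]; simpl in H2.
        -- destruct H3 as [H3|[H3 _]]; [|discriminate]. injection H3; intros; subst. lia.
        -- destruct H3 as [H3|[H3 _]]; discriminate.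
    + exfalso; apply H. right; simpl; auto.
Qed.

Lemma box_closed x F N : closed TX (box x F N).
Proof.
  intros z Hz. unfold box in Hz. apply not_and_or in Hz. destruct Hz as [Ha|Hb].
  - destruct (aclose_notclosed _ _ _ Ha) as [F' HF']. exists F', 0.
    intros w [Hw _] [Hw' _]. exact (HF' _ Hw Hw').
  - destruct (bclose_notclosed _ _ _ Hb) as [N' HN']. exists [], N'.
    intros w [_ Hw] [_ Hw']. exact (HN' _ Hw Hw').
Qed.

Lemma closed_in_compact {Y : Type} (T : topology Y) (K : Y -> Prop) :
  compact_space T -> closed T K -> compact_set T K.
Proof.
  intros Hc HK Fam HFo Hcov.
  destruct (Hc (fun U => Fam U \/ U = (fun z => ~ K z))) as [l [Hl Hlc]].
  - intros U [HU|HU]; [auto|subst; exact HK].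
  - intros x _. destruct (classic (K x)) as [Kx|Kx].
    + destruct (Hcov x Kx) as [U [HU Ux]]. exists U; auto.
    + exists (fun z => ~ K z). auto.
  - assert (Hg : forall l, Forall (fun U => Fam U \/ U = (fun z => ~ K z)) l ->
      exists l', Forall Fam l' /\ forall x, K x -> (exists U, In U l /\ U x) ->
                   exists U, In U l' /\ U x).
    { induction l0 as [|U l0 IH]; intros Hf.
      - exists []. split; [constructor|]. intros x _ [U [[] _]].
      - inversion Hf as [|? ? HU Hf']; subst. destruct (IH Hf') as [l' [Hl' Hl'c]].
        destruct HU as [HU|HU].
        + exists (U :: l'). split; [constructor; auto|].
          intros x Kx [V [[HV|HV] Vx]].
          * subst. exists V; simpl; auto.
          * destruct (Hl'c x Kx (ex_intro _ V (conj HV Vx))) as [W [HW Wx]].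
            exists W; simpl; auto.
        + exists l'. split; auto. intros x Kx [V [[HV|HV] Vx]].
          * subst. contradiction.
          * apply Hl'c; eauto. }
    destruct (Hg l Hl) as [l' [Hl' Hl'c]]. exists l'. split; auto.
    intros x Kx. apply Hl'c; auto.
Qed.

Lemma TX_locally_compact : locally_compact TX.
Proof.
  intros x U HU Ux. destruct (HU x Ux) as [F [N HN]].
  exists (box x F N), (box x F N). split; [apply box_open|].
  split; [apply closed_in_compact; [apply TX_compact|apply box_closed]|].
  split; [apply box_center|]. split; [intros z; auto|]. intros z; auto.
Qed.

Lemma hausdorff_pc {Y : Type} (T : topology Y) x y :
  hausdorff T -> point_closure T x y -> y = x.
Proof.
  intros HT Hpc. destruct (classic (y = x)) as [|Hne]; auto. exfalso.
  destruct (HT x y (fun e => Hne (eq_sym e))) as [U [V [HU [HV [Ux [Vy Hd]]]]]].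
  assert (HC : closed T (fun z => ~ V z)).
  { unfold closed. eapply open_ext; [|exact HV]. intro z; split; [auto|apply NNPP]. }
  apply (Hpc _ HC); auto. intro Vx; apply (Hd x); auto.
Qed.

Lemma hausdorff_sober {Y : Type} (T : topology Y) : hausdorff T -> sober T.
Proof.
  intros HT C [HC [[x0 Cx0] Hirr]].
  assert (Hsing : forall y, C y -> y = x0).
  { intros y Cy. destruct (classic (y = x0)) as [|Hne]; auto. exfalso.
    destruct (HT x0 y (fun e => Hne (eq_sym e))) as [U [V [HU [HV [Ux [Vy Hd]]]]]].
    assert (HF1 : closed T (fun z => ~ U z)).
    { unfold closed. eapply open_ext; [|exact HU]. intro z; split; [auto|apply NNPP]. }
    assert (HF2 : closed T (fun z => ~ V z)).
    { unfold closed. eapply open_ext; [|exact HV]. intro z; split; [auto|apply NNPP]. }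
    destruct (Hirr _ _ HF1 HF2) as [H|H].
    - intros z _. apply not_and_or. apply Hd.
    - exact (H x0 Cx0 Ux).
    - exact (H y Cy Vy). }
  exists x0. split.
  - intro y. split.
    + intros Cy. rewrite (Hsing y Cy). intros D0 _ H; exact H.
    + intros Hpc. rewrite (hausdorff_pc T x0 y HT Hpc). exact Cx0.
  - intros x' Hx'. apply (hausdorff_pc T x' x0 HT). apply Hx'. exact Cx0.
Qed.

Lemma TX_LCS : LCS_complete TX.
Proof.
  exists X, TX, (fun _ => True). split; [apply TX_locally_compact|].
  split; [apply hausdorff_sober, TX_hausdorff|].
  split; [exists (fun _ _ => True); split; [intro; apply openX_full|tauto]|].
  exists (fun x => exist _ x I), (fun y => proj1_sig y).
  split; [|split; [|split]].
  - intros V [U [HU HV]]. apply (open_ext TX U); [|exact HU]. intro x. rewrite (HV (exist _ x I)). simpl. tauto.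
  - intros V HV. exists V. split; auto. tauto.
  - intros x; reflexivity.
  - intros [x []]. reflexivity.
Qed.

Definition Ypred (x : X) : Prop :=
  match x with
  | (None, None) => True
  | (Some _, Some _) => True
  | _ => False
  end.

Lemma Y_UCO : UCO TX Ypred.
Proof.
  exists (fun x => x = (None, None)), (fun x => exists d m, x = (Some d, Some m)).
  split; [|split].
  - intros z Hz. exists [], 0. intros w [Ha Hb] Hw. subst w. simpl in *.
    destruct z as [a b]; simpl in *.
    destruct Ha as [Ha|[Ha _]]; destruct Hb as [Hb|[Hb _]]; subst; auto.
  - intros z [d [m Hz]]. subst. exists [], 0. intros [a b] [Ha Hb]; simpl in *.
    destruct Ha as [Ha|[Ha _]]; [|discriminate]. destruct Hb as [Hb|[Hb _]]; [|discriminate].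
    subst. eauto.
  - intros [[d|] [m|]]; simpl; split; try tauto; intros H;
      try (destruct H as [H|[d' [m' H]]]; discriminate); eauto.
Qed.

Definition Ysub := {x : X | Ypred x}.
Definition SY : topology Ysub := subspace TX Ypred.
Definition pY : Ysub := exist Ypred (None, None) I.
Definition sm (d : D) (m : nat) : Ysub := exist Ypred (Some d, Some m) I.
Definition Ek (d : D) (k : nat) : Ysub -> Prop :=
  fun y => ~ (fst (proj1_sig y) = Some d /\ bge k (snd (proj1_sig y))).

Lemma nbhd_p (A : Ysub -> Prop) : open SY A -> A pY ->
  exists F N, forall y : Ysub, box (None, None) F N (proj1_sig y) -> A y.
Proof.
  intros [U [HU HA]] Ap. apply HA in Ap. simpl in Ap.
  destruct (HU _ Ap) as [F [N HN]]. exists F, N. intros y Hy. apply HA. apply HN. exact Hy.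
Qed.

Fixpoint sumk (k : nat) (l : list D) : nat :=
  match l with [] => 0 | f :: l' => f k + sumk k l' end.

Lemma sumk_ge k l f : In f l -> f k <= sumk k l.
Proof. induction l as [|g l IH]; simpl; [tauto|]. intros [H|H]; [subst; lia|]. specialize (IH H). lia. Qed.

Lemma diag (A : nat -> Ysub -> Prop) : (forall n, open SY (A n) /\ A n pY) ->
  exists d, forall n, exists N, forall m, N <= m -> A n (sm d m).
Proof.
  intros HA.
  assert (H : forall n, exists FN : list D * nat, forall y : Ysub,
    box (None, None) (fst FN) (snd FN) (proj1_sig y) -> A n y).
  { intro n. destruct (HA n) as [H1 H2]. destruct (nbhd_p _ H1 H2) as [F [N HN]].
    exists (F, N). exact HN. }
  destruct (choice_fun _ H) as [FN HFN].
  exists (fun k => S (sumk k (fst (FN k)))). intro n. exists (snd (FN n)).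
  intros m Hm. apply HFN. split.
  - right. split; auto. simpl. intro Hi. apply sumk_ge with (k := n) in Hi. lia.
  - right. split; auto.
Qed.

Lemma Ek_open d k : open SY (Ek d k).
Proof.
  exists (fun x => ~ (fst x = Some d /\ bge k (snd x))). split; [|intro; tauto].
  intros [a b] Hx. simpl in Hx.
  destruct (classic (a = Some d)) as [Ha|Ha].
  - subst a. exists [], 0. intros [a' b'] [Ha' Hb']; simpl in *.
    destruct Ha' as [Ha'|[Ha' _]]; [|discriminate].
    destruct b as [m|].
    + destruct Hb' as [Hb'|[Hb' _]]; [|discriminate]. subst; auto.
    + exfalso; apply Hx; simpl; auto.
  - exists [d], 0. intros [a' b'] [Ha' Hb']; simpl in *. intros [H1 H2]. subst a'.
    destruct Ha' as [Ha'|[Ha' Hd]]; [congruence|]. simpl in Hd. auto.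
Qed.

Lemma Ek_sm d k m : Ek d k (sm d m) -> m < k.
Proof. unfold Ek; simpl. intros H. destruct (le_lt_dec k m); auto. exfalso; auto. Qed.

Lemma Ek_all d (y : Ysub) : (forall k, ~ Ek d k y) -> False.
Proof.
  destruct y as [[a b] Hy]. unfold Ek; simpl. intros H.
  pose proof (H 0) as H0. apply NNPP in H0. destruct H0 as [H1 _]. subst a.
  destruct b as [m|]; [|exact Hy].
  pose proof (H (S m)) as H0. apply NNPP in H0. destruct H0 as [_ H2]. simpl in H2. lia.
Qed.

Lemma list_bound {A : Type} (P : nat -> A -> Prop) (l : list A) :
  Forall (fun U => exists k, P k U) l ->
  exists K, forall U, In U l -> exists k, k <= K /\ P k U.
Proof.
  induction l as [|U l IH]; intros Hf.
  - exists 0. intros U [].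
  - inversion Hf as [|? ? [k Hk] Hf']; subst. destruct (IH Hf') as [K HK].
    exists (Nat.max k K). intros V [HV|HV].
    + subst. exists k. split; auto; lia.
    + destruct (HK V HV) as [k' [Hk' HP]]. exists k'. split; auto; lia.
Qed.

Lemma slice_bound d (Q : Ysub -> Prop) : compact_set SY Q ->
  exists M, forall y, Q y -> Ek d M y.
Proof.
  intros HQ.
  set (Ao := fun y : Ysub => fst (proj1_sig y) <> Some d).
  set (Bl := fun (M : nat) (y : Ysub) => exists m, m < M /\ proj1_sig y = (Some d, Some m)).
  destruct (HQ (fun A => exists M, A = fun y => Ao y \/ Bl M y)) as [l [Hl Hlc]].
  - intros A [M ->]. exists (fun x => fst x <> Some d \/ exists m, m < M /\ x = (Some d, Some m)).
    split; [|intro; tauto].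
    intros [a b] [Hx|[m [Hm Hx]]]; simpl in Hx.
    + exists [d], 0. intros [a' b'] [Ha' Hb']; simpl in *. left. intro; subst a'.
      destruct Ha' as [Ha'|[Ha' Hd]]; [congruence|]. simpl in Hd. auto.
    + injection Hx; intros; subst. exists [], 0. intros [a' b'] [Ha' Hb']; simpl in *.
      right. exists m. split; auto.
      destruct Ha' as [Ha'|[Ha' _]]; [|discriminate].
      destruct Hb' as [Hb'|[Hb' _]]; [|discriminate]. subst; auto.
  - intros [[a b] Hy] _. destruct (classic (a = Some d)) as [Ha|Ha].
    + subst a. destruct b as [m|]; [|destruct Hy].
      exists (fun y => Ao y \/ Bl (S m) y). split; [exists (S m); auto|].
      right. exists m. simpl. split; auto.
    + exists (fun y => Ao y \/ Bl 0 y). split; [exists 0; auto|]. left. exact Ha.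
  - destruct (list_bound (fun M U => U = fun y => Ao y \/ Bl M y) l Hl) as [K HK].
    exists K. intros y Qy. destruct (Hlc y Qy) as [U [HU Uy]].
    destruct (HK U HU) as [k [Hk ->]]. destruct Uy as [Uy|[m [Hm Uy]]].
    + intros [H _]. auto.
    + unfold Ek. rewrite Uy. simpl. lia.
Qed.

Lemma not_CCC : ~ compactly_choquet_complete SY.
Proof.
  intros [s [Hleg Hwin]].
  set (full := fun _ : Ysub => True).
  set (stp := fix stp (n : nat) : list (Ysub * (Ysub -> Prop) * (Ysub -> Prop)) * (Ysub -> Prop) :=
    match n with
    | 0 => ([], full)
    | Datatypes.S k => let h := fst (stp k) in let V := snd (stp k) in
        (h ++ [(pY, V, s h pY V)], s h pY V)
    end).
  set (Vs := fun n => snd (stp n)).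
  set (Us := fun n => s (fst (stp n)) pY (Vs n)).
  set (xs := fun _ : nat => pY).
  assert (Hh : forall n, fst (stp n) = history xs Vs Us n).
  { induction n as [|n IH]; [reflexivity|].
    unfold history. rewrite seq_S, map_app. simpl. fold (history xs Vs Us n).
    rewrite <- IH. reflexivity. }
  assert (HV : forall n, open SY (Vs n) /\ Vs n pY).
  { induction n as [|n IH].
    - split; [apply (open_full SY)|exact I].
    - destruct (Hleg (fst (stp n)) pY (Vs n) (proj1 IH) (proj2 IH)) as [H1 [H2 _]].
      split; [exact H1|exact H2]. }
  assert (HU : forall n, open SY (Us n) /\ Us n pY).
  { intro n. destruct (Hleg (fst (stp n)) pY (Vs n) (proj1 (HV n)) (proj2 (HV n))) as [H1 [H2 _]].
    split; auto. }
  destruct (Hwin xs Vs Us) as [Q [_ [HQc [_ [_ Hbase]]]]].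
  { split; [exact HV|]. split.
    - intros n y Hy. exact Hy.
    - intro n. unfold Us. rewrite Hh. reflexivity. }
  destruct (diag Us HU) as [d Hd].
  destruct (slice_bound d Q HQc) as [M HM].
  destruct (Hbase (Ek d M) (Ek_open d M) HM) as [n Hn].
  destruct (Hd n) as [N HN].
  specialize (Hn _ (HN (Nat.max N M) (Nat.le_max_l _ _))).
  apply Ek_sm in Hn. lia.
Qed.

Section Zorn.
Variable A : Type.
Variable le : A -> A -> Prop.
Hypothesis le_refl : forall a, le a a.
Hypothesis le_trans : forall a b c, le a b -> le b c -> le a c.
Variable P : A -> Prop.
Definition zchain (c : A -> Prop) : Prop :=
  (forall a, c a -> P a) /\ (forall a b, c a -> c b -> le a b \/ le b a).
Hypothesis Hlb : forall c, zchain c -> exists l, P l /\ forall a, c a -> le l a.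

Definition incl (c d : A -> Prop) := forall a, c a -> d a.

Lemma zorn_min : exists m, P m /\ forall a, P a -> le a m -> le m a.
Proof.
  apply NNPP. intros Hno.
  assert (Hstrict : forall m, P m -> exists a, P a /\ le a m /\ ~ le m a).
  { intros m Pm. apply NNPP. intro H. apply Hno. exists m. split; auto.
    intros a Pa Ham. apply NNPP. intro H'. apply H. exists a. auto. }
  assert (Hg : forall c : A -> Prop, exists b, zchain c -> P b /\ (forall a, c a -> le b a) /\ ~ c b).
  { intro c. destruct (classic (zchain c)) as [Hc|Hc].
    - destruct (Hlb c Hc) as [l [Pl Hl]]. destruct (Hstrict l Pl) as [b [Pb [Hbl Hlb']]].
      exists b. intros _. split; auto. split.
      + intros a ca. eapply le_trans; eauto.
      + intro cb. apply Hlb'. auto.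
    - destruct (Hlb (fun _ => False)) as [l _].
      { split; intros; contradiction. }
      exists l. intro; contradiction. }
  destruct (choice_fun _ Hg) as [g Hgs].
  set (f := fun (c : A -> Prop) (a : A) => c a \/ a = g c).
  set (uni := fun (Sf : (A -> Prop) -> Prop) (a : A) => exists c, Sf c /\ c a).
  set (tower := fun (T : (A -> Prop) -> Prop) =>
     T (fun _ => False) /\ (forall c, T c -> T (f c)) /\
     (forall Sf : (A -> Prop) -> Prop, (forall c, Sf c -> T c) ->
        (forall c d, Sf c -> Sf d -> incl c d \/ incl d c) -> T (uni Sf))).
  set (M := fun c => forall T, tower T -> T c).
  assert (HM : tower M).
  { split; [|split].
    - intros T HT. apply HT.
    - intros c Mc T HT. apply HT. apply Mc. auto.
    - intros Sf HSf Hch T HT. apply HT; auto. intros c Sc. apply HSf; auto. }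
  assert (Hf_incl : forall c, incl c (f c)) by (intros c a ca; left; auto).
  set (comparable := fun c => forall d, M d -> incl d c \/ incl c d).
  assert (HA : forall c, M c -> comparable c -> forall d, M d -> incl d c \/ incl (f c) d).
  { intros c Mc Cc.
    assert (HT : tower (fun d => M d /\ (incl d c \/ incl (f c) d))).
    { split; [|split].
      - split; [apply HM|]. left. intros a [].
      - intros d [Md [Hdc|Hfd]]; split; [apply HM; auto| |apply HM; auto|].
        + destruct (Cc (f d) (proj1 (proj2 HM) d Md)) as [H|H]; [left; auto|].
          destruct (classic (incl c d)) as [Hcd|Hcd].
          * assert (c = d) by (apply set_ext; intro a; split; auto).
            subst d. right. intros a; auto.
          * left. apply not_all_ex_not in Hcd. destruct Hcd as [a Ha].
            apply imply_to_and in Ha. destruct Ha as [ca nda].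
            destruct (H a ca) as [da|ea]; [contradiction|].
            intros a' [da'|ea']; [apply Hdc; auto|]. subst. auto.
        + right. intros a Ha. apply Hf_incl, Hfd, Ha.
      - intros Sf HSf Hch. split.
        + apply HM; [intros c' Sc'; apply HSf; auto|auto].
        + destruct (classic (forall d, Sf d -> incl d c)) as [Hall|Hall].
          * left. intros a [d [Sd da]]. apply (Hall d Sd a da).
          * right. apply not_all_ex_not in Hall. destruct Hall as [d Hd].
            apply imply_to_and in Hd. destruct Hd as [Sd Hd].
            destruct (proj2 (HSf d Sd)) as [H|H]; [contradiction|].
            intros a fa. exists d. split; auto. }
    intros d Md. apply (Md _ HT). }
  assert (HB : tower (fun c => M c /\ comparable c)).
  { split; [|split].
    - split; [apply HM|]. intros d _. right. intros a [].
    - intros c [Mc Cc]. split; [apply HM; auto|].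
      intros d Md. destruct (HA c Mc Cc d Md) as [H|H]; [left|right; auto].
      intros a da. apply Hf_incl. auto.
    - intros Sf HSf Hch. split.
      + apply HM; [intros c' Sc'; apply HSf; auto|auto].
      + intros d Md. destruct (classic (forall c, Sf c -> incl c d)) as [Hall|Hall].
        * right. intros a [c [Sc ca]]. apply (Hall c Sc a ca).
        * left. apply not_all_ex_not in Hall. destruct Hall as [c Hc].
          apply imply_to_and in Hc. destruct Hc as [Sc Hc].
          destruct (proj2 (HSf c Sc) d Md) as [H|H]; [|contradiction].
          intros a da. exists c. split; auto. }
  assert (Hlin : forall c d, M c -> M d -> incl c d \/ incl d c).
  { intros c d Mc Md. destruct (Mc _ HB) as [_ Cc]. destruct (Cc d Md); auto. }
  assert (Hchains : tower zchain).
  { split; [|split].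
    - split; intros; contradiction.
    - intros c [Pc Lc]. destruct (Hgs c (conj Pc Lc)) as [Pg [Lg Ng]]. split.
      + intros a [ca|ea]; [auto|subst; auto].
      + intros a b [ca|ea] [cb|eb]; subst; auto.
    - intros Sf HSf Hch. split.
      + intros a [c [Sc ca]]. apply (proj1 (HSf c Sc)); auto.
      + intros a b [c [Sc ca]] [d [Sd db]].
        destruct (Hch c d Sc Sd) as [H|H].
        * apply (proj2 (HSf d Sd)); auto.
        * apply (proj2 (HSf c Sc)); auto. }
  assert (MU : M (uni M)) by (apply (proj2 (proj2 HM)); auto).
  assert (MfU : M (f (uni M))) by (apply (proj1 (proj2 HM)); auto).
  assert (Hch : zchain (uni M)) by (apply MU; auto).
  destruct (Hgs _ Hch) as [_ [_ Ng]]. apply Ng.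
  exists (f (uni M)). split; auto. right; auto.
Qed.
End Zorn.

Lemma closed_inter {Z : Type} (T : topology Z) (C1 C2 : Z -> Prop) :
  closed T C1 -> closed T C2 -> closed T (fun z => C1 z /\ C2 z).
Proof.
  intros H1 H2. unfold closed.
  apply (open_ext T (fun z => exists U, (U = (fun z => ~ C1 z) \/ U = (fun z => ~ C2 z)) /\ U z)).
  - intro z. split.
    + intros [U [[->| ->] Uz]]; tauto.
    + intros H. apply not_and_or in H. destruct H as [H|H]; [exists (fun z => ~ C1 z)|exists (fun z => ~ C2 z)]; auto.
  - apply open_union. intros U [->| ->]; auto.
Qed.

Lemma wf_sober {Z : Type} (TZ : topology Z) (K : nat -> Z -> Prop) (Fz : Z -> Prop) :
  sober TZ -> (forall n, compact_set TZ (K n)) -> (forall n, subset (K (S n)) (K n)) ->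
  closed TZ Fz -> (forall n, exists z, Fz z /\ K n z) ->
  exists x, Fz x /\ forall n, exists r, K n r /\ point_closure TZ x r.
Proof.
  intros Hsob HK Hdec HF HFK.
  assert (Hdec' : forall n m, n <= m -> subset (K m) (K n)).
  { intros n m Hnm. induction Hnm; intros z Hz; [exact Hz|apply IHHnm, Hdec, Hz]. }
  set (P := fun C : Z -> Prop => closed TZ C /\ subset C Fz /\ forall n, exists z, C z /\ K n z).
  destruct (zorn_min (Z -> Prop) (fun C1 C2 => subset C1 C2)
              (fun a z H => H) (fun a b c H1 H2 z H => H2 z (H1 z H)) P) as [Mn [PM HMmin]].
  - intros c [Pc Lc].
    exists (fun z => Fz z /\ forall C, c C -> C z).
    split; [split; [|split]|].
    + unfold closed.
      apply (open_ext TZ (fun z => exists U, (U = (fun z => ~ Fz z) \/ exists C, c C /\ U = (fun z => ~ C z)) /\ U z)).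
      * intro z. split.
        -- intros [U [[->|[C [cC ->]]] Uz]] [H1 H2]; [auto|apply Uz, H2, cC].
        -- intros H. apply not_and_or in H. destruct H as [H|H]; [exists (fun z => ~ Fz z); auto|].
           apply not_all_ex_not in H. destruct H as [C HC]. apply imply_to_and in HC.
           exists (fun z => ~ C z). split; [right; exists C; tauto|tauto].
      * apply open_union. intros U [->|[C [cC ->]]]; auto. apply (proj1 (Pc C cC)).
    + intros z [H _]; auto.
    + intros n. apply NNPP. intros Hno.
      destruct (HK n (fun U => U = (fun z => ~ Fz z) \/ exists C, c C /\ U = (fun z => ~ C z)))
        as [l [Hl Hlc]].
      * intros U [->|[C [cC ->]]]; auto. apply (proj1 (Pc C cC)).
      * intros z Kz. destruct (classic (Fz z)) as [Fzz|Fzz].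
        -- destruct (classic (forall C, c C -> C z)) as [Hall|Hall].
           ++ exfalso. apply Hno. exists z. auto.
           ++ apply not_all_ex_not in Hall. destruct Hall as [C HC]. apply imply_to_and in HC.
              exists (fun z => ~ C z). split; [right; exists C; tauto|tauto].
        -- exists (fun z => ~ Fz z). auto.
      * assert (Hinv : forall l, Forall (fun U => U = (fun z => ~ Fz z) \/ exists C, c C /\ U = (fun z => ~ C z)) l ->
          exists C0, subset C0 Fz /\ (exists z, C0 z /\ K n z) /\
            (forall C, c C -> subset C0 C \/ subset C C0) /\
            forall U, In U l -> forall z, C0 z -> ~ U z).
        { induction l0 as [|U l0 IH]; intros Hf.
          - exists Fz. split; [intros z; auto|]. split; [apply HFK|]. split.
            + intros C cC. right. apply (proj1 (proj2 (Pc C cC))).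
            + intros U [].
          - inversion Hf as [|? ? HU Hf']; subst. destruct (IH Hf') as [C0 [H1 [H2 [H3 H4]]]].
            destruct HU as [->|[C [cC ->]]].
            + exists C0. split; auto. split; auto. split; auto.
              intros U [<-|HU] z C0z; [|apply (H4 U HU z C0z)]. intro Hn; apply Hn, H1, C0z.
            + destruct (H3 C cC) as [Hs|Hs].
              * exists C0. split; auto. split; auto. split; auto.
                intros U [<-|HU] z C0z; [|apply (H4 U HU z C0z)]. intro Hn; apply Hn, Hs, C0z.
              * exists C. split; [intros z Cz; apply H1, Hs, Cz|]. split.
                { apply (proj2 (proj2 (Pc C cC))). }
                split; [intros C' cC'; apply Lc; auto|].
                intros U [<-|HU] z Cz; [tauto|apply (H4 U HU z (Hs z Cz))]. }
        destruct (Hinv l Hl) as [C0 [_ [[z [C0z Kz]] [_ H4]]]].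
        destruct (Hlc z Kz) as [U [HU Uz]]. exact (H4 U HU z C0z Uz).
    + intros a ca z [_ Hz]. apply Hz; auto.
  - destruct PM as [HMc [HMF HMK]].
    assert (Hirr : irreducible_closed TZ Mn).
    { split; [auto|]. split.
      - destruct (HMK 0) as [z [Mz _]]. eauto.
      - intros F1 F2 HF1 HF2 Hsub.
        destruct (classic (subset Mn F1)) as [H1|H1]; [left; auto|].
        destruct (classic (subset Mn F2)) as [H2|H2]; [right; auto|].
        exfalso.
        assert (Hn1 : ~ P (fun z => Mn z /\ F1 z)).
        { intros HP. apply H1. intros z Mz. apply (HMmin _ HP (fun z H => proj1 H) z Mz). }
        assert (Hn2 : ~ P (fun z => Mn z /\ F2 z)).
        { intros HP. apply H2. intros z Mz. apply (HMmin _ HP (fun z H => proj1 H) z Mz). }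
        assert (Hm1 : exists n, ~ exists z, (Mn z /\ F1 z) /\ K n z).
        { apply not_all_ex_not. intro H. apply Hn1. split; [apply closed_inter; auto|].
          split; auto. intros z [Mz _]. auto. }
        assert (Hm2 : exists n, ~ exists z, (Mn z /\ F2 z) /\ K n z).
        { apply not_all_ex_not. intro H. apply Hn2. split; [apply closed_inter; auto|].
          split; auto. intros z [Mz _]. auto. }
        destruct Hm1 as [n1 Hm1], Hm2 as [n2 Hm2].
        destruct (HMK (Nat.max n1 n2)) as [z [Mz Kz]].
        destruct (Hsub z Mz) as [Fz1|Fz2].
        + apply Hm1. exists z. split; auto. apply (Hdec' n1 (Nat.max n1 n2)); auto. lia.
        + apply Hm2. exists z. split; auto. apply (Hdec' n2 (Nat.max n1 n2)); auto. lia. }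
    destruct (Hsob _ Hirr) as [x [Hx _]].
    exists x. split.
    + apply HMF. apply Hx. intros C _ H; exact H.
    + intros n. destruct (HMK n) as [r [Mr Kr]]. exists r. split; auto. apply Hx; auto.
Qed.

Lemma not_LCS : ~ LCS_complete SY.
Proof.
  intros [Z [TZ [G [Hlc [Hsob [[Wn [HWo HW]] [f [g [fc [gc [gf fg]]]]]]]]]]].
  set (z0 := proj1_sig (f pY)).
  assert (Gz0 : forall n, Wn n z0) by (apply HW; exact (proj2_sig (f pY))).
  assert (Hch : forall A : Z -> Prop, exists OK : (Z -> Prop) * (Z -> Prop),
     open TZ A -> A z0 -> open TZ (fst OK) /\ compact_set TZ (snd OK) /\ fst OK z0 /\
       subset (fst OK) (snd OK) /\ subset (snd OK) A).
  { intro A. destruct (classic (open TZ A /\ A z0)) as [[HA Az]|HA].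
    - destruct (Hlc z0 A HA Az) as [O [K H]]. exists (O, K). intros _ _. exact H.
    - exists (A, A). intros H1 H2. exfalso; auto. }
  destruct (choice_fun _ Hch) as [lcf Hlcf].
  set (Aseq := fix Aseq (n : nat) : Z -> Prop :=
     match n with 0 => Wn 0 | S k => fun z => fst (lcf (Aseq k)) z /\ Wn (S k) z end).
  assert (HA : forall n, open TZ (Aseq n) /\ Aseq n z0).
  { induction n as [|n IH]; [split; [apply HWo|apply Gz0]|].
    destruct (Hlcf (Aseq n) (proj1 IH) (proj2 IH)) as [H1 [_ [H3 _]]].
    split; [apply open_inter; auto|split; auto]. }
  set (On := fun n => fst (lcf (Aseq n))).
  set (Kn := fun n => snd (lcf (Aseq n))).
  assert (HOK : forall n, open TZ (On n) /\ compact_set TZ (Kn n) /\ On n z0 /\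
       subset (On n) (Kn n) /\ subset (Kn n) (Aseq n)).
  { intro n. apply Hlcf; apply HA. }
  assert (HAW : forall n, subset (Aseq n) (Wn n)).
  { intros [|n] z Hz; [exact Hz|exact (proj2 Hz)]. }
  assert (Hdec : forall n, subset (Kn (S n)) (Kn n)).
  { intros n z Hz. destruct (HOK (S n)) as [_ [_ [_ [_ H5]]]].
    destruct (H5 z Hz) as [H _]. apply (HOK n). exact H. }
  set (Vy := fun n (y : Ysub) => On n (proj1_sig (f y))).
  assert (HVy : forall n, open SY (Vy n) /\ Vy n pY).
  { intro n. split; [|apply (HOK n)]. apply (fc (fun w => On n (proj1_sig w))). exists (On n). split; [apply (HOK n)|tauto]. }
  destruct (diag Vy HVy) as [d Hd].
  assert (HE : forall k, exists O', open TZ O' /\ forall w : {z | G z}, Ek d k (g w) <-> O' (proj1_sig w)).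
  { intro k. exact (gc (Ek d k) (Ek_open d k)). }
  destruct (choice_fun _ HE) as [Ok HOk].
  set (Fz := fun z => forall k, ~ Ok k z).
  assert (HFc : closed TZ Fz).
  { unfold closed. apply (open_ext TZ (fun z => exists U, (exists k, U = Ok k) /\ U z)).
    - intro z. split.
      + intros [U [[k ->] Uz]] H. apply (H k Uz).
      + intros H. apply not_all_ex_not in H. destruct H as [k Hk]. apply NNPP in Hk.
        exists (Ok k). eauto.
    - apply open_union. intros U [k ->]. apply (HOk k). }
  assert (HFK : forall n, exists z, Fz z /\ Kn n z).
  { intro n. apply NNPP. intro Hno.
    destruct (proj1 (proj2 (HOK n)) (fun U => exists k, U = Ok k)) as [l [Hl Hlc2]].
    - intros U [k ->]. apply (HOk k).
    - intros z Kz. destruct (classic (Fz z)) as [Fzz|Fzz].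
      + exfalso; apply Hno; eauto.
      + apply not_all_ex_not in Fzz. destruct Fzz as [k Hk]. apply NNPP in Hk.
        exists (Ok k). eauto.
    - destruct (list_bound (fun k U => U = Ok k) l Hl) as [Kb HKb].
      destruct (Hd n) as [N HN].
      set (m := Nat.max N Kb).
      assert (Hm : Vy n (sm d m)) by (apply HN; unfold m; lia).
      destruct (Hlc2 _ (proj1 (proj2 (proj2 (proj2 (HOK n)))) _ Hm)) as [U [HU Uz]].
      destruct (HKb U HU) as [k [Hk ->]].
      apply (proj2 (HOk k) (f (sm d m))) in Uz. rewrite gf in Uz. apply Ek_sm in Uz. unfold m in Uz. lia. }
  destruct (wf_sober TZ Kn Fz Hsob (fun n => proj1 (proj2 (HOK n))) Hdec HFc HFK) as [x [Fx Hx]].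
  assert (Gx : G x).
  { apply HW. intro n. destruct (Hx n) as [r [Kr Hr]].
    apply NNPP. intro Hnw.
    assert (HC : closed TZ (fun z => ~ Wn n z)).
    { unfold closed. eapply open_ext; [|exact (HWo n)]. intro z; split; [auto|apply NNPP]. }
    apply (Hr _ HC Hnw). apply HAW, (HOK n), Kr. }
  apply (Ek_all d (g (exist G x Gx))). intros k Hk.
  apply (proj2 (HOk k) (exist G x Gx)) in Hk. apply (Fx k Hk).
Qed.

Theorem proposition14p5 :
  (exists (X : Type) (T : topology X) (Y : X -> Prop),
      compact_space T /\ hausdorff T /\ UCO T Y /\
      ~ compactly_choquet_complete (subspace T Y)) /\
  (exists (X : Type) (T : topology X) (Y : X -> Prop),
      LCS_complete T /\ UCO T Y /\ ~ LCS_complete (subspace T Y)).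
Proof.
  split.
  - exists X, TX, Ypred. split; [apply TX_compact|]. split; [apply TX_hausdorff|].
    split; [apply Y_UCO|]. exact not_CCC.
  - exists X, TX, Ypred. split; [apply TX_LCS|]. split; [apply Y_UCO|]. exact not_LCS.
Qed.
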